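(* Let $a\in\mathcal{T}_n\setminus\mathcal{S}_n$ and $G\le\mathcal{S}_n$. The following are equivalent: (1) $\langle a,G\rangle\setminus G=\langle a,\mathcal{S}_n\rangle\setminus\mathcal{S}_n$; (2) $\{b\in\langle a,G\rangle:\operatorname{rank}(b)=\operatorname{rank}(a)\}=\{b\in\langle a,\mathcal{S}_n\rangle:\operatorname{rank}(b)=\operatorname{rank}(a)\}$.
   Context: $\Omega=\{1,\ldots,n\}$, $\mathcal{T}_n$ is the monoid of all maps $\Omega\to\Omega$, $\mathcal{S}_n$ the symmetric group, $\langle\cdot\rangle$ denotes the generated semigroup, and $\operatorname{rank}(b)=|\Omega b|$. *)

(* Defs.v *)
From mathcomp Require Import all_boot all_fingroup.
Set Implicit Arguments. Unset Strict Implicit. Unset Printing Implicit Defensive.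

(* Omega = {1..n} is modelled by 'I_n; T_n = {ffun 'I_n -> 'I_n}. *)
Definition trans (n : nat) := {ffun 'I_n -> 'I_n}.

(* composition in the paper's right-action convention: x (a b) = (x a) b *)
Definition tmul n (a b : trans n) : trans n := [ffun x => b (a x)].

Definition permf n (g : {perm 'I_n}) : trans n := [ffun x => g x].

Definition inPerms n (G : {set {perm 'I_n}}) (b : trans n) : Prop :=
  exists2 g, g \in G & b = permf g.

Inductive gen n (a : trans n) (G : {set {perm 'I_n}}) : trans n -> Prop :=
| gen_a : gen a G a
| gen_perm g : g \in G -> gen a G (permf g)
| gen_mul b c : gen a G b -> gen a G c -> gen a G (tmul b c).

Definition rank n (b : trans n) : nat := #|[set b x | x in 'I_n]|.

(* Main.v *)
Require Import Defs.
From mathcomp Require Import all_boot all_fingroup.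
Set Implicit Arguments. Unset Strict Implicit. Unset Printing Implicit Defensive.
Import GroupScope.

Section L.
Variable n : nat.
Implicit Types (a b c : trans n) (g h : {perm 'I_n}).

Lemma tmulA a b c : tmul (tmul a b) c = tmul a (tmul b c).
Proof. by apply/ffunP => x; rewrite !ffunE. Qed.

Lemma permfM g h : tmul (permf g) (permf h) = permf (g * h).
Proof. by apply/ffunP => x; rewrite !ffunE permM. Qed.

Lemma permf1l b : tmul (permf 1) b = b.
Proof. by apply/ffunP => x; rewrite !ffunE perm1. Qed.

Lemma permf1r b : tmul b (permf 1) = b.
Proof. by apply/ffunP => x; rewrite !ffunE perm1. Qed.

Lemma rank_tmul b c : rank (tmul b c) = #|[set c y | y in [set b x | x in 'I_n]]|.
Proof.
rewrite /rank -imset_comp; apply: eq_card => y.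
by apply/imsetP/imsetP => [[x _ ->]|[x _ ->]]; exists x => //; rewrite ffunE.
Qed.

Lemma rank_tmul_l b c : rank (tmul b c) <= rank b.
Proof. by rewrite rank_tmul leq_imset_card. Qed.

Lemma rank_tmul_r b c : rank (tmul b c) <= rank c.
Proof.
rewrite rank_tmul /rank; apply: subset_leq_card; apply/subsetP => y.
by case/imsetP => z _ ->; apply: imset_f.
Qed.

Lemma rank_le b : rank b <= n.
Proof. by rewrite /rank (leq_trans (leq_imset_card _ _)) // card_ord. Qed.

Lemma rank_permf g : rank (permf g) = n.
Proof.
transitivity #|[set g x | x in 'I_n]|.
  rewrite /rank; apply: eq_card => y.
  by apply/imsetP/imsetP => [[x _ ->]|[x _ ->]]; exists x => //; rewrite ffunE.
by rewrite card_imset ?card_ord //; exact: perm_inj.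
Qed.

Lemma rank_sandwich g b h : rank (tmul (tmul (permf g) b) (permf h)) = rank b.
Proof.
rewrite rank_tmul.
have -> : [set permf h y | y in [set tmul (permf g) b x | x in 'I_n]]
   = [set h y | y in [set tmul (permf g) b x | x in 'I_n]].
  by apply/setP => z; apply/imsetP/imsetP => [[x Hx ->]|[x Hx ->]]; exists x => //; rewrite ffunE.
rewrite card_imset; last exact: perm_inj.
rewrite /rank; apply: eq_card => y; apply/imsetP/imsetP.
  by case=> x _ ->; exists (g x) => //; rewrite !ffunE.
case=> x _ ->; exists (g^-1 x) => //; by rewrite !ffunE permKV.
Qed.

Lemma rank_lt a : ~ inPerms [set: {perm 'I_n}] a -> rank a < n.
Proof.
move=> Ha; rewrite ltn_neqAle rank_le andbT; apply/negP => /eqP Hr.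
have: #|[set a x | x in 'I_n]| == #|'I_n| by rewrite card_ord; apply/eqP; exact: Hr.
move/imset_injP => inj.
have inja : injective (fun x => a x) by move=> x y; apply: inj.
apply: Ha; exists (perm inja); first by rewrite inE.
by apply/ffunP => x; rewrite ffunE permE.
Qed.

Lemma inPerms_rank (X : {set {perm 'I_n}}) b : inPerms X b -> rank b = n.
Proof. by case=> g _ ->; apply: rank_permf. Qed.

Lemma gen_mono a (G : {set {perm 'I_n}}) b : gen a G b -> gen a [set: {perm 'I_n}] b.
Proof.
elim=> [|g _|b1 c1 _ H1 _ H2]; first exact: gen_a.
  by apply: gen_perm; rewrite inE.
exact: gen_mul.
Qed.

Lemma gen_dich a (G : {group {perm 'I_n}}) b : gen a G b -> inPerms G b \/ rank b <= rank a.
Proof.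
elim=> [|g Hg|b1 c1 _ [[g1 Hg1 ->]|H1] _ [[g2 Hg2 ->]|H2]].
- by right.
- by left; exists g.
- by left; exists (g1 * g2); [exact: groupM | exact: permfM].
- by right; exact: leq_trans (rank_tmul_r _ _) H2.
- by right; exact: leq_trans (rank_tmul_l _ _) H1.
- by right; exact: leq_trans (rank_tmul_l _ _) H1.
Qed.

Lemma gen_Q a (G : {group {perm 'I_n}}) b :
  (forall g h, gen a G (tmul (tmul (permf g) a) (permf h))) ->
  gen a [set: {perm 'I_n}] b ->
  (exists g, b = permf g) \/
  (forall g h, gen a G (tmul (tmul (permf g) b) (permf h))).
Proof.
move=> Ha; elim=> [|g _|b1 c1 _ [[g1 ->]|H1] _ [[g2 ->]|H2]].
- by right.
- by left; exists g.
- by left; exists (g1 * g2); rewrite permfM.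
- right=> g h; rewrite -tmulA permfM; exact: H2.
- right=> g h; rewrite !tmulA permfM -!tmulA; exact: H1.
- right=> g h.
  have -> : tmul (tmul (permf g) (tmul b1 c1)) (permf h)
     = tmul (tmul (tmul (permf g) b1) (permf 1)) (tmul (tmul (permf 1) c1) (permf h)).
    by rewrite permf1r permf1l !tmulA.
  by apply: gen_mul; [apply: H1 | apply: H2].
Qed.

End L.

Theorem lemma8p2 (n : nat) (a : trans n) (G : {group {perm 'I_n}}) :
  ~ inPerms [set: {perm 'I_n}] a ->
  ((forall b : trans n,
      (gen a G b /\ ~ inPerms G b) <->
      (gen a [set: {perm 'I_n}] b /\ ~ inPerms [set: {perm 'I_n}] b))
   <->
   (forall b : trans n,
      (gen a G b /\ rank b = rank a) <->
      (gen a [set: {perm 'I_n}] b /\ rank b = rank a))).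
Proof.
move=> Ha; have Hlt := rank_lt Ha.
have notP (X : {set {perm 'I_n}}) b : rank b = rank a -> ~ inPerms X b.
  by move=> Hr /inPerms_rank; rewrite Hr => E; rewrite E ltnn in Hlt.
split=> H b.
- split=> [[Hg Hr]|[Hs Hr]].
    by split=> //; case: (proj1 (H b) (conj Hg (notP _ _ Hr))).
  by split=> //; case: (proj2 (H b) (conj Hs (notP _ _ Hr))).
- split=> [[Hg Hn]|[Hs Hn]].
    split; first exact: gen_mono Hg.
    case: (gen_dich Hg) => // Hr Hp.
    by move: (inPerms_rank Hp) => E; rewrite E in Hr; move: (leq_ltn_trans Hr Hlt); rewrite ltnn.
  have HQ : forall g h, gen a G (tmul (tmul (permf g) a) (permf h)).
    move=> g h; apply: (fun X => proj1 (proj2 (H _) X)); split; last exact: rank_sandwich.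
    apply: gen_mul; [apply: gen_mul; [apply: gen_perm|apply: gen_a]|apply: gen_perm]; by rewrite inE.
  case: (gen_Q HQ Hs) => [[g E]|Hb].
    by exfalso; apply: Hn; exists g => //; rewrite inE.
  split; first by move: (Hb 1 1); rewrite permf1l permf1r.
  by move=> [g Hg E]; apply: Hn; exists g => //; rewrite inE.
Qed.
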